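(* Let $X$ be a reflexive Banach space, $S\subseteq\partial B_1(0)$ a nonempty set, $\varphi:X\to\mathbb{R}$ locally Lipschitz continuous, and $\mu<\inf_S\varphi$ a real number. Suppose that (a) $\lim_{t\to\infty}\varphi(tu)=-\infty$ for all $u\in S$, and (b) $\langle v^*,v\rangle<0$ for all $v\in\varphi^{-1}(\mu)$ and all $v^*\in\partial\varphi(v)$. Then there exists a continuous mapping $\tau:S\to(1,\infty)$ such that for all $u\in S$ and all $t\ge1$: $\varphi(tu)>\mu$ if $t<\tau(u)$, $\varphi(tu)=\mu$ if $t=\tau(u)$, and $\varphi(tu)<\mu$ if $t>\tau(u)$.
   Context: $B_1(0)$ is the open unit ball of $X$ and $\partial B_1(0)$ the unit sphere; $\langle\cdot,\cdot\rangle$ is the duality pairing between $X^*$ and $X$. For a locally Lipschitz $\varphi:X\to\mathbb{R}$, the Clarke generalized directional derivative is $\varphi^\circ(u;v)=\limsup_{w\to u,\,t\to0^+}\frac{\varphi(w+tv)-\varphi(w)}{t}$ and the Clarke generalized subdifferential is $\partial\varphi(u)=\{u^*\in X^*:\langle u^*,v\rangle\le\varphi^\circ(u;v)\ \forall v\in X\}$. *)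

(* Defs.v *)
From Stdlib Require Import Reals.
Open Scope R_scope.

Record NormedSpace := {
  NS_carrier :> Type;
  nzero : NS_carrier;
  nadd : NS_carrier -> NS_carrier -> NS_carrier;
  nopp : NS_carrier -> NS_carrier;
  nscal : R -> NS_carrier -> NS_carrier;
  nnorm : NS_carrier -> R;
  nadd_assoc : forall x y z, nadd x (nadd y z) = nadd (nadd x y) z;
  nadd_comm : forall x y, nadd x y = nadd y x;
  nadd_0 : forall x, nadd x nzero = x;
  nadd_opp : forall x, nadd x (nopp x) = nzero;
  nscal_1 : forall x, nscal 1 x = x;
  nscal_assoc : forall a b x, nscal a (nscal b x) = nscal (a * b) x;
  nscal_distr_v : forall a x y, nscal a (nadd x y) = nadd (nscal a x) (nscal a y);
  nscal_distr_s : forall a b x, nscal (a + b) x = nadd (nscal a x) (nscal b x);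
  nnorm_eq0 : forall x, nnorm x = 0 -> x = nzero;
  nnorm_scal : forall a x, nnorm (nscal a x) = Rabs a * nnorm x;
  nnorm_triangle : forall x y, nnorm (nadd x y) <= nnorm x + nnorm y
}.

Arguments nzero {_}.
Arguments nadd {_} _ _.
Arguments nopp {_} _.
Arguments nscal {_} _ _.
Arguments nnorm {_} _.

Definition nsub {X : NormedSpace} (x y : X) : X := nadd x (nopp y).

Definition complete (X : NormedSpace) : Prop :=
  forall u : nat -> X,
    (forall eps, 0 < eps -> exists N, forall m n, (N <= m)%nat -> (N <= n)%nat ->
        nnorm (nsub (u m) (u n)) < eps) ->
    exists l : X, forall eps, 0 < eps -> exists N, forall n, (N <= n)%nat ->
        nnorm (nsub (u n) l) < eps.

(** Elements of the dual X^* : continuous (= bounded) linear functionals.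
    The duality pairing <f, x> is application f x. *)
Definition is_linear_functional {X : NormedSpace} (f : X -> R) : Prop :=
  (forall x y, f (nadd x y) = f x + f y) /\ (forall a x, f (nscal a x) = a * f x).

Definition in_dual {X : NormedSpace} (f : X -> R) : Prop :=
  is_linear_functional f /\ exists C, forall x, Rabs (f x) <= C * nnorm x.

(** Reflexivity: the canonical embedding X -> X^** is surjective, i.e. every
    bounded linear functional Phi on X^* (bounded w.r.t. the dual norm
    ||f||_* = inf { M >= 0 | forall x, |f x| <= M ||x|| }) is evaluation at some x. *)
Definition reflexive (X : NormedSpace) : Prop :=
  forall Phi : (X -> R) -> R,
    (forall f g, in_dual f -> in_dual g -> Phi (fun x => f x + g x) = Phi f + Phi g) ->
    (forall a f, in_dual f -> Phi (fun x => a * f x) = a * Phi f) ->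
    (exists C, forall f M, in_dual f -> 0 <= M ->
        (forall x, Rabs (f x) <= M * nnorm x) -> Rabs (Phi f) <= C * M) ->
    exists x0 : X, forall f, in_dual f -> Phi f = f x0.

Definition banach (X : NormedSpace) : Prop := complete X.

Definition locally_lipschitz {X : NormedSpace} (phi : X -> R) : Prop :=
  forall u, exists r L, 0 < r /\ forall x y, nnorm (nsub x u) < r -> nnorm (nsub y u) < r ->
    Rabs (phi x - phi y) <= L * nnorm (nsub x y).

(** [is_clarke_dd phi u v L] : L is the (finite) Clarke generalized directional
    derivative  limsup_{w -> u, t -> 0+} (phi (w + t v) - phi w) / t. *)
Definition is_clarke_dd {X : NormedSpace} (phi : X -> R) (u v : X) (L : R) : Prop :=
  (forall eps, 0 < eps -> exists delta, 0 < delta /\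
     forall w t, nnorm (nsub w u) < delta -> 0 < t < delta ->
       (phi (nadd w (nscal t v)) - phi w) / t <= L + eps) /\
  (forall eps delta, 0 < eps -> 0 < delta -> exists w t,
       nnorm (nsub w u) < delta /\ 0 < t < delta /\
       L - eps < (phi (nadd w (nscal t v)) - phi w) / t).

Definition clarke_subdiff {X : NormedSpace} (phi : X -> R) (u : X) (us : X -> R) : Prop :=
  in_dual us /\ forall v L, is_clarke_dd phi u v L -> us v <= L.

(* Main.v *)
Require Import Defs.
From Stdlib Require Import Reals Lra ClassicalEpsilon Classical.
From mathcomp Require classical_sets.
Open Scope R_scope.


Section Vec.
Variable X : NormedSpace.
Implicit Types x y z w : X.

Lemma nadd_0l x : nadd nzero x = x.
Proof. rewrite nadd_comm; apply nadd_0. Qed.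

Lemma nadd_cancel z x y : nadd z x = nadd z y -> x = y.
Proof.
intros H. rewrite <- (nadd_0l x), <- (nadd_0l y).
rewrite <- (nadd_opp _ z), (nadd_comm _ z (nopp z)), <- !nadd_assoc, H. reflexivity.
Qed.

Lemma nscal_0 x : nscal 0 x = nzero.
Proof.
apply (nadd_cancel (nscal 0 x)). rewrite nadd_0, <- nscal_distr_s, Rplus_0_l. reflexivity.
Qed.

Lemma nscal_zero a : nscal a (@nzero X) = nzero.
Proof. rewrite <- (nscal_0 nzero), nscal_assoc, Rmult_0_r. reflexivity. Qed.

Lemma nopp_scal x : nopp x = nscal (-1) x.
Proof.
apply (nadd_cancel x). rewrite nadd_opp. rewrite <- (nscal_1 _ x) at 1.
rewrite <- nscal_distr_s. replace (1 + -1) with 0 by ring. rewrite nscal_0. reflexivity.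
Qed.

Lemma nnorm_zero : nnorm (@nzero X) = 0.
Proof. rewrite <- (nscal_0 nzero), nnorm_scal, Rabs_R0. ring. Qed.

Lemma Rabs_m1 : Rabs (-1) = 1.
Proof. unfold Rabs; destruct Rcase_abs; lra. Qed.

Lemma nnorm_ge0 x : 0 <= nnorm x.
Proof.
pose proof (nnorm_triangle _ x (nopp x)) as H. rewrite nadd_opp, nnorm_zero in H.
rewrite nopp_scal, nnorm_scal in H. rewrite Rabs_m1 in H. lra.
Qed.

Lemma nscal_add_scal a b x : nadd (nscal a x) (nscal b x) = nscal (a + b) x.
Proof. rewrite nscal_distr_s. reflexivity. Qed.

Lemma nsub_scal a b x : nsub (nscal a x) (nscal b x) = nscal (a - b) x.
Proof.
unfold nsub. rewrite nopp_scal, nscal_assoc, nscal_add_scal. f_equal; ring.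
Qed.

Lemma nsub_scal_r t x y : nsub (nscal t x) (nscal t y) = nscal t (nsub x y).
Proof.
unfold nsub. rewrite !nopp_scal, !nscal_assoc, nscal_distr_v, nscal_assoc.
f_equal; f_equal; ring.
Qed.

Lemma nsub_addl w e : nsub (nadd w e) w = e.
Proof.
unfold nsub. rewrite (nadd_comm _ w e), <- nadd_assoc, nadd_opp, nadd_0. reflexivity.
Qed.

Lemma nsub_add_r w e z : nsub (nadd w e) z = nadd (nsub w z) e.
Proof.
unfold nsub. rewrite <- !nadd_assoc. f_equal. apply nadd_comm.
Qed.

Lemma nnorm_opp x : nnorm (nopp x) = nnorm x.
Proof. rewrite nopp_scal, nnorm_scal, Rabs_m1; ring. Qed.

Lemma nopp_add x y : nopp (nadd x y) = nadd (nopp x) (nopp y).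
Proof. rewrite !nopp_scal, nscal_distr_v. reflexivity. Qed.

Lemma nopp_opp x : nopp (nopp x) = x.
Proof. rewrite !nopp_scal, nscal_assoc. replace (-1 * -1) with 1 by ring. apply nscal_1. Qed.

Lemma nsub_sym x y : nnorm (nsub x y) = nnorm (nsub y x).
Proof.
rewrite <- nnorm_opp. unfold nsub. rewrite nopp_add, nopp_opp, nadd_comm. reflexivity.
Qed.

Lemma nsub_split x y z : nsub x z = nadd (nsub x y) (nsub y z).
Proof.
unfold nsub. rewrite <- nadd_assoc, (nadd_assoc _ (nopp y) y), (nadd_comm _ (nopp y) y),
  nadd_opp, nadd_0l. reflexivity.
Qed.

Lemma nnorm_sub_tri x y z : nnorm (nsub x z) <= nnorm (nsub x y) + nnorm (nsub y z).
Proof. rewrite (nsub_split x y z). apply nnorm_triangle. Qed.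

Lemma nsub_xx x : nsub x x = nzero.
Proof. apply nadd_opp. Qed.

Lemma nadd_scal_scal t h x : nadd (nscal t x) (nscal h (nscal t x)) = nscal (t + h * t) x.
Proof. rewrite nscal_assoc, nscal_add_scal. reflexivity. Qed.

Lemma nadd_shuffle (a b c : X) : nadd (nadd a b) (nadd c (nopp a)) = nadd c b.
Proof.
rewrite (nadd_comm _ a b), <- (nadd_assoc _ b a), (nadd_comm _ c (nopp a)),
  (nadd_assoc _ a (nopp a) c), nadd_opp, nadd_0l. apply nadd_comm.
Qed.

End Vec.

Lemma my_zorn (T:Type) (P : (T->Prop)->Prop) :
  (forall F : (T -> Prop) -> Prop, (forall X, F X -> P X) ->
     (forall A B, F A -> F B -> (forall t, A t -> B t) \/ (forall t, B t -> A t)) ->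
     P (fun a => exists2 i, F i & i a)) ->
  exists A, P A /\ forall B, (forall t, A t -> B t) -> ~ (forall t, B t -> A t) -> ~ P B.
Proof.
intros H. destruct (@classical_sets.Zorn_bigcup T P H) as [A [PA HA]].
exists A; split; auto. intros B h1 h2. apply HA. split; assumption.
Qed.

Section HB.
Variable X : NormedSpace.
Variable p : X -> R.
Hypothesis Hsub : forall x y, p (nadd x y) <= p x + p y.
Hypothesis Hhom : forall a x, 0 < a -> p (nscal a x) = a * p x.

Lemma p0 : p nzero = 0.
Proof.
pose proof (Hhom 2 nzero) as H. rewrite nscal_zero in H. lra.
Qed.

Definition good (G : X * R -> Prop) : Prop :=
  (forall x a b, G (x,a) -> G (x,b) -> a = b) /\
  (forall x a y b, G (x,a) -> G (y,b) -> G (nadd x y, a + b)) /\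
  (forall x a l, G (x,a) -> G (nscal l x, l * a)) /\
  (forall x a, G (x,a) -> a <= p x).

Definition ext (G : X * R -> Prop) (y : X) (c : R) : X * R -> Prop :=
  fun zb => exists x a l, G (x,a) /\ fst zb = nadd x (nscal l y) /\ snd zb = a + l * c.

Lemma ext_sub G y c : forall t, G t -> ext G y c t.
Proof.
intros [x a] H. exists x, a, 0. split; [exact H|]. simpl. rewrite nscal_0, nadd_0. split; [reflexivity|ring].
Qed.

Lemma good_zero G : good G -> forall x a, G (x,a) -> G (nzero, 0).
Proof.
intros [_ [_ [Hs _]]] x a H. pose proof (Hs x a 0 H) as H'. rewrite nscal_0, Rmult_0_l in H'. exact H'.
Qed.

Lemma ext_good G y c : good G -> (~ exists a, G (y,a)) ->
  (forall x a, G (x,a) -> a - p (nsub x y) <= c) ->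
  (forall x a, G (x,a) -> c <= p (nadd x y) - a) ->
  good (ext G y c).
Proof.
intros HG Hy Hlo Hup. destruct HG as [Gf [Ga [Gs Gd]]].
split; [|split; [|split]].
- intros z b1 b2 [x1 [a1 [l1 [H1 [E1 F1]]]]] [x2 [a2 [l2 [H2 [E2 F2]]]]].
  simpl in *. subst.
  destruct (Req_dec l1 l2) as [El|Nl].
  + subst l2. assert (x1 = x2).
    { rewrite (nadd_comm _ x1), (nadd_comm _ x2) in E2. apply nadd_cancel in E2. exact E2. }
    subst x2. rewrite (Gf _ _ _ H1 H2). reflexivity.
  + exfalso. apply Hy.
    exists (/(l1 - l2) * (a2 + -1 * a1)).
    assert (Hv : nscal (l1 - l2) y = nadd x2 (nscal (-1) x1)).
    { apply (nadd_cancel _ (nadd x1 (nscal l2 y))).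
      rewrite <- nadd_assoc, nscal_add_scal. replace (l2 + (l1 - l2)) with l1 by ring.
      rewrite E2, <- nopp_scal, nadd_shuffle. reflexivity. }
    replace y with (nscal (/(l1 - l2)) (nadd x2 (nscal (-1) x1))).
    2:{ rewrite <- Hv, nscal_assoc. replace (/ (l1 - l2) * (l1 - l2)) with 1 by (field; lra).
        apply nscal_1. }
    apply Gs. apply Ga; [exact H2|]. apply Gs. exact H1.
- intros z1 b1 z2 b2 [x1 [a1 [l1 [H1 [E1 F1]]]]] [x2 [a2 [l2 [H2 [E2 F2]]]]].
  simpl in *. subst. exists (nadd x1 x2), (a1 + a2), (l1 + l2). split; [apply Ga; assumption|].
  simpl. split; [|ring]. rewrite <- nscal_add_scal.
  rewrite <- !nadd_assoc. f_equal. rewrite !nadd_assoc. f_equal. apply nadd_comm.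
- intros z b m [x1 [a1 [l1 [H1 [E1 F1]]]]]. simpl in *. subst.
  exists (nscal m x1), (m * a1), (m * l1). split; [apply Gs; assumption|]. simpl.
  rewrite nscal_distr_v, nscal_assoc. split; [reflexivity|ring].
- intros z b [x1 [a1 [l1 [H1 [E1 F1]]]]]. simpl in *. subst.
  destruct (Rtotal_order l1 0) as [Hl|[Hl|Hl]].
  + set (m := - l1). assert (Hm : 0 < m) by (unfold m; lra).
    pose proof (Hlo _ _ (Gs _ _ (/m) H1)) as Hc.
    assert (E : nscal m (nsub (nscal (/ m) x1) y) = nadd x1 (nscal l1 y)).
    { unfold nsub. rewrite nscal_distr_v, nscal_assoc, nopp_scal, nscal_assoc.
      replace (m * / m) with 1 by (field; lra). rewrite nscal_1. f_equal. f_equal. unfold m; ring. }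
    rewrite <- E, Hhom by exact Hm.
    apply Rmult_le_compat_l with (r := m) in Hc; [|lra].
    replace (a1 + l1 * c) with (m * (/ m * a1) - m * c); [lra|]. unfold m. field. lra.
  + subst. rewrite nscal_0, nadd_0. replace (a1 + 0 * c) with a1 by ring. apply Gd; exact H1.
  + pose proof (Hup _ _ (Gs _ _ (/l1) H1)) as Hc.
    assert (E : nscal l1 (nadd (nscal (/ l1) x1) y) = nadd x1 (nscal l1 y)).
    { rewrite nscal_distr_v, nscal_assoc.
      replace (l1 * / l1) with 1 by (field; lra). rewrite nscal_1. reflexivity. }
    rewrite <- E, Hhom by exact Hl.
    apply Rmult_le_compat_l with (r := l1) in Hc; [|lra].
    replace (a1 + l1 * c) with (l1 * c + l1 * (/ l1 * a1)); [lra|]. field. lra.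
Qed.

Lemma ext_has G y c : (exists x a, G (x,a)) -> good G -> ext G y c (y, c).
Proof.
intros [x [a H]] HG. exists nzero, 0, 1. split; [eapply good_zero; eauto|]. simpl.
rewrite nadd_0l, nscal_1. split; [reflexivity|ring].
Qed.

Lemma c_exists G y : good G -> G (nzero, 0) ->
  exists c, (forall x a, G (x,a) -> a - p (nsub x y) <= c) /\
            (forall x a, G (x,a) -> c <= p (nadd x y) - a).
Proof.
intros HG H0. destruct HG as [Gf [Ga [Gs Gd]]].
set (E := fun r => exists x a, G (x,a) /\ r = a - p (nsub x y)).
assert (key : forall x a x' a', G (x,a) -> G (x',a') -> a - p (nsub x y) <= p (nadd x' y) - a').
{ intros x a x' a' H1 H2. pose proof (Gd _ _ (Ga _ _ _ _ H1 H2)) as Hd.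
  assert (Ex : nadd x x' = nadd (nsub x y) (nadd x' y)).
  { unfold nsub. rewrite <- nadd_assoc. f_equal. rewrite nadd_assoc, (nadd_comm _ (nopp y)),
      <- nadd_assoc, (nadd_comm _ (nopp y)), nadd_opp, nadd_0. reflexivity. }
  rewrite Ex in Hd. pose proof (Hsub (nsub x y) (nadd x' y)). lra. }
destruct (completeness E) as [c [Hc1 Hc2]].
- exists (p (nadd nzero y) - 0). intros r [x [a [H ->]]]. apply key; assumption.
- exists (0 - p (nsub nzero y)). exists nzero, 0. split; auto.
- exists c. split.
  + intros x a H. apply Hc1. exists x, a. auto.
  + intros x a H. apply Hc2. intros r [x' [a' [H' ->]]]. apply key; assumption.
Qed.

Theorem hahn_banach (v : X) : v <> nzero ->
  exists f : X -> R, is_linear_functional f /\ (forall x, f x <= p x) /\ f v = p v.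
Proof.
intros Hv.
set (G0 := fun t : X * R => t = (nzero, 0)).
assert (HG0 : good G0).
{ unfold G0; split; [|split; [|split]].
  - intros x a b Ha Hb. inversion Ha; inversion Hb; subst; reflexivity.
  - intros x a y b Ha Hb. inversion Ha; inversion Hb; subst. rewrite nadd_0, Rplus_0_r. reflexivity.
  - intros x a l Ha. inversion Ha; subst. rewrite nscal_zero, Rmult_0_r. reflexivity.
  - intros x a Ha. inversion Ha; subst. rewrite p0. lra. }
assert (Hny : ~ exists a, G0 (v,a)).
{ intros [a Ha]. inversion Ha. auto. }
assert (Hlo : forall x a, G0 (x,a) -> a - p (nsub x v) <= p v).
{ intros x a Ha. inversion Ha; subst. pose proof (Hsub v (nsub nzero v)).
  unfold nsub in *. rewrite nadd_0l, nadd_opp, p0 in *. lra. }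
assert (Hup : forall x a, G0 (x,a) -> p v <= p (nadd x v) - a).
{ intros x a Ha. inversion Ha; subst. rewrite nadd_0l. lra. }
set (G1 := ext G0 v (p v)).
assert (HG1 : good G1) by (apply ext_good; auto).
assert (Hv1 : G1 (v, p v)) by (apply ext_has; auto; exists nzero, 0; reflexivity).
set (P := fun G => (forall t, ~ G t) \/ (good G /\ forall t, G1 t -> G t)).
destruct (my_zorn _ P) as [A [PA Amax]].
- intros F HF Htot.
  destruct (classic (exists t i, F i /\ i t)) as [[t0 [i0 [Fi0 it0]]]|Hno].
  + right.
    assert (Gi : forall i t, F i -> i t -> good i /\ forall t, G1 t -> i t).
    { intros i t Fi it. destruct (HF i Fi) as [Hn|Hg]; [exfalso; apply (Hn t); exact it|exact Hg]. }
    destruct (Gi i0 t0 Fi0 it0) as [_ Hi0].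
    split.
    * split; [|split; [|split]].
      -- intros x a b [i1 F1 H1] [i2 F2 H2].
         destruct (Htot i1 i2 F1 F2) as [S12|S21].
         ++ destruct (Gi i2 _ F2 H2) as [[Gf _] _]. apply (Gf x); auto.
         ++ destruct (Gi i1 _ F1 H1) as [[Gf _] _]. apply (Gf x); auto.
      -- intros x a y b [i1 F1 H1] [i2 F2 H2].
         destruct (Htot i1 i2 F1 F2) as [S12|S21].
         ++ destruct (Gi i2 _ F2 H2) as [[_ [Ga _]] _]. exists i2; auto.
         ++ destruct (Gi i1 _ F1 H1) as [[_ [Ga _]] _]. exists i1; auto.
      -- intros x a l [i1 F1 H1]. destruct (Gi i1 _ F1 H1) as [[_ [_ [Gs _]]] _].
         exists i1; auto.
      -- intros x a [i1 F1 H1]. destruct (Gi i1 _ F1 H1) as [[_ [_ [_ Gd]]] _]. eauto.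
    * intros t Ht. exists i0; auto.
  + left. intros t [i Fi it]. apply Hno. exists t, i. auto.
- destruct PA as [Hemp|[HA HA1]].
  { exfalso. apply (Amax G1).
    - intros t Ht. exfalso; apply (Hemp t Ht).
    - intros H. apply (Hemp _ (H _ Hv1)).
    - right. split; auto. }
  assert (Htot : forall x, exists a, A (x,a)).
  { intros y. apply NNPP. intros Hy.
    assert (A0 : A (nzero, 0)) by (eapply good_zero; eauto).
    destruct (c_exists A y HA A0) as [c [Hc1 Hc2]].
    apply (Amax (ext A y c)).
    - apply ext_sub.
    - intros H. apply Hy. exists c. apply H. apply ext_has; auto. exists nzero, 0; exact A0.
    - right. split; [apply ext_good; auto|]. intros t Ht. apply ext_sub. auto. }
  set (f := fun x => epsilon (inhabits 0) (fun a => A (x,a))).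
  assert (Hf : forall x, A (x, f x)).
  { intros x. unfold f. apply epsilon_spec. apply Htot. }
  destruct HA as [Gf [Ga [Gs Gd]]].
  exists f. split; [split|split].
  + intros x y. apply (Gf (nadd x y)); [apply Hf|]. apply Ga; apply Hf.
  + intros a x. apply (Gf (nscal a x)); [apply Hf|]. apply Gs; apply Hf.
  + intros x. apply Gd. apply Hf.
  + apply (Gf v); [apply Hf|]. apply HA1. exact Hv1.
Qed.

End HB.

Lemma lub_approx (E : R -> Prop) l eps : is_lub E l -> 0 < eps -> exists x, E x /\ l - eps < x.
Proof.
intros [H1 H2] He. apply NNPP. intros Hn.
assert (l <= l - eps); [|lra]. apply H2. intros x Ex.
destruct (Rle_lt_dec x (l - eps)); auto. exfalso; apply Hn; exists x; auto.
Qed.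

Lemma clarke_unique (X : NormedSpace) (phi : X -> R) z d L1 L2 :
  is_clarke_dd phi z d L1 -> is_clarke_dd phi z d L2 -> L1 = L2.
Proof.
assert (H : forall L1 L2, is_clarke_dd phi z d L1 -> is_clarke_dd phi z d L2 -> ~ L1 < L2).
{ intros A B [HA1 _] [_ HB2] Hlt.
  destruct (HA1 ((B - A)/2)) as [de [Hde Hq]]; [lra|].
  destruct (HB2 ((B - A)/2) de) as [w [t [Hw [Ht Hq2]]]]; [lra|lra|].
  specialize (Hq w t Hw Ht). lra. }
intros H1 H2. destruct (Rtotal_order L1 L2) as [h|[h|h]]; auto.
- exfalso; exact (H _ _ H1 H2 h).
- exfalso; exact (H _ _ H2 H1 h).
Qed.

Section Clarke.
Variable X : NormedSpace.
Variable phi : X -> R.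
Variable z : X.
Variables r K : R.
Hypothesis Hr : 0 < r.
Hypothesis Hlip : forall x y, nnorm (nsub x z) < r -> nnorm (nsub y z) < r ->
    Rabs (phi x - phi y) <= K * nnorm (nsub x y).

Definition qt (w : X) (t : R) (d : X) := (phi (nadd w (nscal t d)) - phi w) / t.

Lemma qbound d w t : nnorm (nsub w z) < r / (1 + nnorm d) -> 0 < t < r / (1 + nnorm d) ->
  Rabs (qt w t d) <= Rabs K * nnorm d.
Proof.
intros Hw Ht. pose proof (nnorm_ge0 _ d) as Hd.
assert (Hr1 : r / (1 + nnorm d) <= r).
{ unfold Rdiv. rewrite <- (Rmult_1_r r) at 2. apply Rmult_le_compat_l; [lra|].
  rewrite <- Rinv_1. apply Rinv_le_contravar; lra. }
assert (Hb : nnorm (nsub (nadd w (nscal t d)) z) < r).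
{ rewrite nsub_add_r. eapply Rle_lt_trans; [apply nnorm_triangle|].
  rewrite nnorm_scal, Rabs_pos_eq by lra.
  assert (t * nnorm d <= r / (1 + nnorm d) * nnorm d) by (apply Rmult_le_compat_r; lra).
  assert (r / (1 + nnorm d) * (1 + nnorm d) = r) by (field; lra). nra. }
assert (Hw' : nnorm (nsub w z) < r) by lra.
pose proof (Hlip _ _ Hb Hw') as Hl.
rewrite nsub_addl, nnorm_scal, (Rabs_pos_eq t) in Hl by lra.
unfold qt, Rdiv. rewrite Rabs_mult, Rabs_inv, (Rabs_pos_eq t) by lra.
apply Rmult_le_reg_r with t; [lra|]. rewrite Rmult_assoc, Rinv_l, Rmult_1_r by lra.
pose proof (Rle_abs K). assert (0 <= t * nnorm d) by (apply Rmult_le_pos; lra). nra.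
Qed.


Lemma clarke_ex d : exists L, is_clarke_dd phi z d L.
Proof.
pose proof (nnorm_ge0 _ d) as Hd.
set (d0 := r / (1 + nnorm d)).
assert (Hd0 : 0 < d0) by (unfold d0; apply Rdiv_lt_0_compat; lra).
set (B := Rabs K * nnorm d).
set (Q := fun de q => exists w t, nnorm (nsub w z) < de /\ 0 < t < de /\ q = qt w t d).
assert (Qb : forall de q, de <= d0 -> Q de q -> Rabs q <= B).
{ intros de q Hde [w [t [Hw [Ht ->]]]]. apply qbound; unfold d0 in Hde; lra. }
assert (Qne : forall de, 0 < de -> Q de (qt z (de/2) d)).
{ intros de Hde. exists z, (de/2). rewrite nsub_xx, nnorm_zero. repeat split; lra. }
assert (Qlub : forall de, 0 < de -> de <= d0 -> exists l, is_lub (Q de) l).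
{ intros de H1 H2. destruct (completeness (Q de)) as [l Hl].
  - exists B. intros q Hq. pose proof (Qb _ _ H2 Hq). pose proof (Rle_abs q). lra.
  - eexists; apply (Qne de H1).
  - exists l; exact Hl. }
set (s := fun de => epsilon (inhabits 0) (fun l => is_lub (Q de) l)).
assert (Hs : forall de, 0 < de -> de <= d0 -> is_lub (Q de) (s de)).
{ intros de H1 H2. unfold s. apply epsilon_spec. apply Qlub; auto. }
assert (Hslow : forall de, 0 < de -> de <= d0 -> - B <= s de).
{ intros de H1 H2. destruct (Hs de H1 H2) as [Hu _]. pose proof (Hu _ (Qne de H1)).
  pose proof (Qb _ _ H2 (Qne de H1)). pose proof (Rle_abs (- qt z (de/2) d)) as hh. rewrite Rabs_Ropp in hh. lra. }
set (E := fun y => exists de, 0 < de <= d0 /\ y = - s de).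
destruct (completeness E) as [m [Hm1 Hm2]].
{ exists B. intros y [de [Hde ->]]. pose proof (Hslow de ltac:(lra) ltac:(lra)). lra. }
{ exists (- s d0). exists d0. split; [lra|reflexivity]. }
exists (- m). split.
- intros eps Heps.
  assert (Hex : exists de, 0 < de <= d0 /\ s de < - m + eps).
  { apply NNPP. intros Hn.
    assert (m <= m - eps); [|lra]. apply Hm2. intros y [de [Hde ->]].
    destruct (Rlt_le_dec (s de) (- m + eps)) as [h|h]; [exfalso; apply Hn; exists de; auto|lra]. }
  destruct Hex as [de [Hde Hsd]]. exists de. split; [lra|].
  intros w t Hw Ht. destruct (Hs de ltac:(lra) ltac:(lra)) as [Hu _].
  assert (qt w t d <= s de) by (apply Hu; exists w, t; auto). unfold qt in *. lra.
- intros eps de Heps Hde.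
  set (de' := Rmin de d0).
  assert (Hde' : 0 < de' <= d0) by (unfold de'; split; [apply Rmin_glb_lt; lra|apply Rmin_r]).
  assert (Hsm : - m <= s de').
  { assert (- s de' <= m) by (apply Hm1; exists de'; split; [lra|reflexivity]). lra. }
  destruct (lub_approx _ _ eps (Hs de' ltac:(lra) ltac:(lra)) Heps) as [q [[w [t [Hw [Ht ->]]]] Hq]].
  assert (de' <= de) by apply Rmin_l.
  exists w, t. split; [lra|]. split; [lra|]. unfold qt in Hq. lra.
Qed.


Definition cl d := epsilon (inhabits 0) (fun L => is_clarke_dd phi z d L).
Lemma cl_spec d : is_clarke_dd phi z d (cl d).
Proof. unfold cl. apply epsilon_spec. apply clarke_ex. Qed.

Lemma Rmin_pos a b : 0 < a -> 0 < b -> 0 < Rmin a b.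
Proof. intros; apply Rmin_glb_lt; auto. Qed.

Lemma cl_hom a d : 0 < a -> cl (nscal a d) = a * cl d.
Proof.
intros Ha. symmetry. apply (clarke_unique X phi z (nscal a d)); [|apply cl_spec].
destruct (cl_spec d) as [C1 C2]. split.
- intros eps He. destruct (C1 (eps/a)) as [de [Hde Hq]]; [apply Rdiv_lt_0_compat; lra|].
  exists (Rmin de (de/a)). split; [apply Rmin_pos; [lra|apply Rdiv_lt_0_compat; lra]|].
  intros w t Hw Ht.
  assert (h1 := Rmin_l de (de/a)). assert (h2 := Rmin_r de (de/a)).
  assert (Hta : t * a < de).
  { assert (t < de / a) by lra. apply Rmult_lt_compat_r with (r := a) in H; [|lra].
    replace (de / a * a) with de in H by (field; lra). lra. }
  specialize (Hq w (t*a) ltac:(lra) ltac:(split; nra)).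
  rewrite nscal_assoc.
  set (N := phi (nadd w (nscal (t * a) d)) - phi w) in *.
  replace (N / t) with (a * (N / (t * a))) by (field; lra).
  apply Rmult_le_compat_l with (r := a) in Hq; [|lra].
  replace (a * (cl d + eps / a)) with (a * cl d + eps) in Hq by (field; lra). exact Hq.
- intros eps de He Hde.
  destruct (C2 (eps/a) (Rmin de (a*de))) as [w [t [Hw [Ht Hq]]]];
    [apply Rdiv_lt_0_compat; lra|apply Rmin_pos; nra|].
  assert (h1 := Rmin_l de (a*de)). assert (h2 := Rmin_r de (a*de)).
  exists w, (t/a). split; [lra|]. split.
  { split; [apply Rdiv_lt_0_compat; lra|]. apply Rmult_lt_reg_r with a; [lra|].
    replace (t / a * a) with t by (field; lra). nra. }
  rewrite nscal_assoc. replace (t / a * a) with t by (field; lra).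
  set (N := phi (nadd w (nscal t d)) - phi w) in *.
  replace (N / (t / a)) with (a * (N / t)) by (field; lra).
  apply Rmult_lt_compat_l with (r := a) in Hq; [|lra].
  replace (a * (cl d - eps / a)) with (a * cl d - eps) in Hq by (field; lra). exact Hq.
Qed.

Lemma cl_sub d1 d2 : cl (nadd d1 d2) <= cl d1 + cl d2.
Proof.
destruct (cl_spec d1) as [A1 _]. destruct (cl_spec d2) as [B1 _].
destruct (cl_spec (nadd d1 d2)) as [_ C2].
apply Rnot_lt_le. intros Hlt.
set (eps := (cl (nadd d1 d2) - cl d1 - cl d2) / 3).
assert (He : 0 < eps) by (unfold eps; lra).
destruct (A1 eps He) as [de1 [Hde1 Hq1]].
destruct (B1 eps He) as [de2 [Hde2 Hq2]].
pose proof (nnorm_ge0 _ d1) as Hd1.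
set (de := Rmin de1 (de2 / (1 + nnorm d1))).
assert (Hde : 0 < de) by (apply Rmin_pos; [lra|apply Rdiv_lt_0_compat; lra]).
assert (h1 := Rmin_l de1 (de2 / (1 + nnorm d1))). assert (h2 := Rmin_r de1 (de2 / (1 + nnorm d1))).
fold de in h1, h2.
assert (h3 : de * (1 + nnorm d1) <= de2).
{ apply Rmult_le_compat_r with (r := 1 + nnorm d1) in h2; [|lra].
  replace (de2 / (1 + nnorm d1) * (1 + nnorm d1)) with de2 in h2 by (field; lra). exact h2. }
destruct (C2 eps de He Hde) as [w [t [Hw [Ht Hq]]]].
set (w' := nadd w (nscal t d1)).
assert (Hw' : nnorm (nsub w' z) < de2).
{ unfold w'. rewrite nsub_add_r. eapply Rle_lt_trans; [apply nnorm_triangle|].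
  rewrite nnorm_scal, Rabs_pos_eq by lra. nra. }
assert (Ht2 : 0 < t < de2) by nra.
specialize (Hq1 w t ltac:(lra) ltac:(lra)). specialize (Hq2 w' t Hw' Ht2).
assert (Ew : nadd w (nscal t (nadd d1 d2)) = nadd w' (nscal t d2)).
{ unfold w'. rewrite nscal_distr_v. apply nadd_assoc. }
rewrite Ew in Hq.
assert (Hsplit : (phi (nadd w' (nscal t d2)) - phi w) / t =
   (phi (nadd w' (nscal t d2)) - phi w') / t + (phi w' - phi w) / t) by (field; lra).
unfold w' in Hsplit at 3. rewrite Hsplit in Hq. unfold eps in *. lra.
Qed.

Lemma cl_bound d : cl d <= Rabs K * nnorm d.
Proof.
destruct (cl_spec d) as [_ C2]. pose proof (nnorm_ge0 _ d).
apply Rnot_lt_le. intros Hlt.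
destruct (C2 (cl d - Rabs K * nnorm d) (r / (1 + nnorm d))) as [w [t [Hw [Ht Hq]]]];
  [lra|apply Rdiv_lt_0_compat; lra|].
pose proof (qbound d w t Hw Ht). unfold qt in *. pose proof (Rle_abs ((phi (nadd w (nscal t d)) - phi w) / t)).
lra.
Qed.

End Clarke.

Lemma clarke_neg (X : NormedSpace) (phi : X -> R) (mu : R)
  (Hphi : locally_lipschitz phi)
  (Hb : forall v, phi v = mu -> forall vs, clarke_subdiff phi v vs -> vs v < 0)
  v : phi v = mu -> v <> nzero -> exists L, is_clarke_dd phi v v L /\ L < 0.
Proof.
intros Hv Hnz. destruct (Hphi v) as [r [K [Hr Hl]]].
set (p := cl X phi v).
destruct (hahn_banach X p (cl_sub X phi v r K Hr Hl) (fun a x Ha => cl_hom X phi v r K Hr Hl a x Ha) v Hnz)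
  as [f [[Lf1 Lf2] [Hfp Hfv]]].
exists (p v). split; [apply (cl_spec X phi v r K Hr Hl)|].
rewrite <- Hfv. apply (Hb v Hv f). split.
- split; [split; assumption|]. exists (Rabs K). intros x. apply Rabs_le. split.
  + pose proof (Hfp (nscal (-1) x)) as H1. rewrite Lf2 in H1.
    pose proof (cl_bound X phi v r K Hr Hl (nscal (-1) x)) as H2.
    rewrite nnorm_scal, Rabs_m1 in H2. unfold p in *. lra.
  + pose proof (Hfp x). pose proof (cl_bound X phi v r K Hr Hl x). unfold p in *. lra.
- intros d L HL. rewrite (clarke_unique X phi v d L (p d) HL (cl_spec X phi v r K Hr Hl d)). apply Hfp.
Qed.

Lemma first_hit (h : R -> R) (c lo : R)
  (hc : forall t eps, 0 < eps -> exists de, 0 < de /\ forall s, Rabs (s - t) < de -> Rabs (h s - h t) < eps)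
  (hex : exists t, lo <= t /\ h t <= c) :
  exists s0, lo <= s0 /\ h s0 <= c /\ (forall s, lo <= s < s0 -> c < h s) /\ (lo < s0 -> h s0 = c).
Proof.
set (E := fun y => exists t, lo <= t /\ h t <= c /\ y = - t).
destruct (completeness E) as [m [Hm1 Hm2]].
{ exists (- lo). intros y [t [H1 [H2 ->]]]. lra. }
{ destruct hex as [t [H1 H2]]. exists (- t). exists t. auto. }
assert (Tlo : lo <= - m).
{ assert (m <= - lo); [|lra]. apply Hm2. intros y [t [H1 [H2 ->]]]. lra. }
assert (Tlb : forall t, lo <= t -> h t <= c -> - m <= t).
{ intros t H1 H2. assert (- t <= m) by (apply Hm1; exists t; auto). lra. }
assert (Tgr : forall b, (forall t, lo <= t -> h t <= c -> b <= t) -> b <= - m).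
{ intros b Hb. assert (m <= - b); [|lra]. apply Hm2. intros y [t [H1 [H2 ->]]].
  pose proof (Hb t H1 H2). lra. }
assert (HT : h (- m) <= c).
{ apply Rnot_lt_le. intros Hlt. destruct (hc (- m) (h (- m) - c)) as [de [Hde Hs]]; [lra|].
  assert (- m + de / 2 <= - m); [|lra]. apply Tgr. intros t H1 H2.
  apply Rnot_lt_le. intros Ht. pose proof (Tlb t H1 H2).
  assert (Rabs (t - - m) < de) by (apply Rabs_def1; lra).
  specialize (Hs t H0). pose proof (Rle_abs (h (- m) - h t)).
  rewrite Rabs_minus_sym in Hs. lra. }
exists (- m). split; [exact Tlo|]. split; [exact HT|]. split.
- intros s [H1 H2]. apply Rnot_le_lt. intros H3. pose proof (Tlb s H1 H3). lra.
- intros Hlt. apply Rle_antisym; [exact HT|]. apply Rnot_lt_le. intros Hlt2.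
  destruct (hc (- m) (c - h (- m))) as [de [Hde Hs]]; [lra|].
  set (s := Rmax lo (- m - de / 2)).
  assert (hs1 : lo <= s) by apply Rmax_l. assert (hs2 : - m - de/2 <= s) by apply Rmax_r.
  assert (hs3 : s < - m) by (apply Rmax_lub_lt; lra).
  assert (Hsd : Rabs (s - - m) < de) by (apply Rabs_def1; lra).
  specialize (Hs s Hsd). pose proof (Rle_abs (h s - h (- m))).
  assert (c < h s).
  { apply Rnot_le_lt. intros H3. pose proof (Tlb s hs1 H3). lra. }
  lra.
Qed.

Lemma phi_cont (X : NormedSpace) (phi : X -> R) (Hphi : locally_lipschitz phi) x :
  forall eps, 0 < eps -> exists de, 0 < de /\ forall y, nnorm (nsub y x) < de -> Rabs (phi y - phi x) < eps.
Proof.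
intros eps He. destruct (Hphi x) as [r [K [Hr Hl]]].
pose proof (Rabs_pos K).
exists (Rmin r (eps / (Rabs K + 1))). split.
{ apply Rmin_glb_lt; [lra|apply Rdiv_lt_0_compat; lra]. }
intros y Hy. assert (h1 := Rmin_l r (eps / (Rabs K + 1))). assert (h2 := Rmin_r r (eps / (Rabs K + 1))).
assert (Hxx : nnorm (nsub x x) < r) by (rewrite nsub_xx, nnorm_zero; lra).
pose proof (Hl y x ltac:(lra) Hxx) as HL. pose proof (nnorm_ge0 _ (nsub y x)).
pose proof (Rle_abs K).
assert (nnorm (nsub y x) < eps / (Rabs K + 1)) by lra.
assert (Rabs K * nnorm (nsub y x) <= Rabs K * (eps / (Rabs K + 1))) by (apply Rmult_le_compat_l; lra).
assert (Rabs K * (eps / (Rabs K + 1)) < eps).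
{ apply Rmult_lt_reg_r with (Rabs K + 1); [lra|].
  replace (Rabs K * (eps / (Rabs K + 1)) * (Rabs K + 1)) with (Rabs K * eps) by (field; lra). nra. }
nra.
Qed.

Section Main.
Variable X : NormedSpace.
Variable phi : X -> R.
Variable mu : R.
Hypothesis Hphi : locally_lipschitz phi.
Hypothesis Hb : forall v, phi v = mu -> forall vs, clarke_subdiff phi v vs -> vs v < 0.
Variable u : X.
Hypothesis Hu : nnorm u = 1.

Let g t := phi (nscal t u).

Lemma g_cont t eps : 0 < eps -> exists de, 0 < de /\ forall s, Rabs (s - t) < de -> Rabs (g s - g t) < eps.
Proof.
intros He. destruct (phi_cont X phi Hphi (nscal t u) eps He) as [de [Hde H]].
exists de. split; auto. intros s Hs. apply H. rewrite nsub_scal, nnorm_scal, Hu. lra.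
Qed.

Lemma cross t : 1 <= t -> g t = mu ->
  exists de, 0 < de /\ (forall s, t - de < s < t -> mu < g s) /\ (forall s, t < s < t + de -> g s < mu).
Proof.
intros Ht Hg. set (v := nscal t u).
assert (Hv : v <> nzero).
{ intros E. assert (nnorm v = t) by (unfold v; rewrite nnorm_scal, Hu, Rabs_pos_eq; lra).
  rewrite E, nnorm_zero in H. lra. }
destruct (clarke_neg X phi mu Hphi Hb v Hg Hv) as [L [[C1 _] HL]].
destruct (C1 (- L / 2)) as [de1 [Hde1 Hq]]; [lra|].
set (de := Rmin (t * de1) de1).
assert (h1 := Rmin_l (t * de1) de1). assert (h2 := Rmin_r (t * de1) de1). fold de in h1, h2.
assert (Hde : 0 < de) by (apply Rmin_glb_lt; nra).
exists de. split; [exact Hde|]. split.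
- intros s [Hs1 Hs2]. set (h := (t - s) / t).
  assert (Hh : 0 < h < de1).
  { unfold h. split; [apply Rdiv_lt_0_compat; lra|].
    apply Rmult_lt_reg_r with t; [lra|]. replace ((t - s) / t * t) with (t - s) by (field; lra). nra. }
  assert (Hw : nnorm (nsub (nscal s u) v) < de1).
  { unfold v. rewrite nsub_scal, nnorm_scal, Hu, Rabs_left1 by lra. lra. }
  specialize (Hq _ h Hw Hh).
  assert (E : nadd (nscal s u) (nscal h v) = v).
  { unfold v. rewrite nscal_assoc, nscal_add_scal. f_equal. unfold h. field. lra. }
  rewrite E in Hq. unfold g. fold v. rewrite <- Hg. unfold g; fold v.
  set (N := phi v - phi (nscal s u)) in *.
  assert (EN : N = N / h * h) by (field; lra).
  assert (N / h * h <= (L + - L / 2) * h) by (apply Rmult_le_compat_r; lra).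
  assert (N < 0) by nra. unfold N in *. lra.
- intros s [Hs1 Hs2]. set (h := (s - t) / t).
  assert (Hh : 0 < h < de1).
  { unfold h. split; [apply Rdiv_lt_0_compat; lra|].
    apply Rmult_lt_reg_r with t; [lra|]. replace ((s - t) / t * t) with (s - t) by (field; lra). nra. }
  assert (Hw : nnorm (nsub v v) < de1) by (rewrite nsub_xx, nnorm_zero; lra).
  specialize (Hq _ h Hw Hh).
  assert (E : nadd v (nscal h v) = nscal s u).
  { unfold v. rewrite nadd_scal_scal. f_equal. unfold h. field. lra. }
  rewrite E in Hq. rewrite <- Hg. unfold g; fold v.
  set (N := phi (nscal s u) - phi v) in *.
  assert (EN : N = N / h * h) by (field; lra).
  assert (N / h * h <= (L + - L / 2) * h) by (apply Rmult_le_compat_r; lra).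
  assert (N < 0) by nra. unfold N in *. lra.
Qed.


Lemma tau_ex : mu < g 1 -> (exists T0, forall t, T0 <= t -> g t < mu) ->
  exists T, 1 < T /\ forall t, 1 <= t ->
    (t < T -> mu < g t) /\ (t = T -> g t = mu) /\ (T < t -> g t < mu).
Proof.
intros H1 [T0 HT0].
assert (hex : exists t, 1 <= t /\ g t <= mu).
{ exists (Rmax 1 T0). split; [apply Rmax_l|]. left. apply HT0. apply Rmax_r. }
destruct (first_hit g mu 1 (fun t eps He => g_cont t eps He) hex) as [s0 [Hs0 [Hgs0 [Hbel Heq]]]].
assert (Hs01 : 1 < s0).
{ destruct Hs0 as [h|h]; auto. subst s0. lra. }
specialize (Heq Hs01).
exists s0. split; [exact Hs01|]. intros t Ht. split; [|split].
- intros Hlt. apply Hbel. lra.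
- intros ->. exact Heq.
- intros Hlt. apply Rnot_le_lt. intros Hge.
  destruct (cross s0 ltac:(lra) Heq) as [de [Hde [_ Hright]]].
  assert (Hts : s0 + de <= t).
  { apply Rnot_lt_le. intros h. specialize (Hright t ltac:(lra)). lra. }
  set (a := s0 + de / 2).
  assert (Hga : g a < mu) by (apply Hright; unfold a; lra).
  assert (hex2 : exists t, a <= t /\ - g t <= - mu).
  { exists t. split; [unfold a; lra|lra]. }
  assert (hc2 : forall t eps, 0 < eps -> exists de, 0 < de /\
     forall s, Rabs (s - t) < de -> Rabs (- g s - - g t) < eps).
  { intros t' eps He. destruct (g_cont t' eps He) as [d' [Hd' Hc]]. exists d'. split; auto.
    intros s Hs. replace (- g s - - g t') with (- (g s - g t')) by ring. rewrite Rabs_Ropp. auto. }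
  destruct (first_hit (fun x => - g x) (- mu) a hc2 hex2) as [s1 [Ha1 [Hg1 [Hbel1 Heq1]]]].
  assert (Has1 : a < s1).
  { destruct Ha1 as [h|h]; auto. subst s1. lra. }
  specialize (Heq1 Has1).
  assert (Hgs1 : g s1 = mu) by lra.
  destruct (cross s1 ltac:(unfold a in *; lra) Hgs1) as [de2 [Hde2 [Hleft _]]].
  set (s := Rmax a (s1 - de2 / 2)).
  assert (hs1 : a <= s) by apply Rmax_l. assert (hs2 : s1 - de2/2 <= s) by apply Rmax_r.
  assert (hs3 : s < s1) by (apply Rmax_lub_lt; lra).
  specialize (Hleft s ltac:(lra)). specialize (Hbel1 s ltac:(lra)). simpl in Hbel1. lra.
Qed.

End Main.

Theorem lemma2p5 (X : NormedSpace) (HB : banach X) (Hrefl : reflexive X)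
  (S : X -> Prop) (phi : X -> R) (mu : R)
  (HSsphere : forall u, S u -> nnorm u = 1)
  (HSne : exists u, S u)
  (Hphi : locally_lipschitz phi)
  (Hmu : exists m, mu < m /\ forall u, S u -> m <= phi u)
  (Ha : forall u, S u -> forall M, exists T, forall t, T <= t -> phi (nscal t u) < M)
  (Hb : forall v, phi v = mu -> forall vs, clarke_subdiff phi v vs -> vs v < 0) :
  exists tau : X -> R,
    (forall u, S u -> 1 < tau u) /\
    (forall u, S u -> forall eps, 0 < eps -> exists delta, 0 < delta /\
        forall v, S v -> nnorm (nsub v u) < delta -> Rabs (tau v - tau u) < eps) /\
    (forall u t, S u -> 1 <= t ->
        (t < tau u -> mu < phi (nscal t u)) /\
        (t = tau u -> phi (nscal t u) = mu) /\
        (tau u < t -> phi (nscal t u) < mu)).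
Proof.
set (P := fun u T => 1 < T /\ forall t, 1 <= t ->
    (t < T -> mu < phi (nscal t u)) /\ (t = T -> phi (nscal t u) = mu) /\ (T < t -> phi (nscal t u) < mu)).
set (tau := fun u => epsilon (inhabits 0) (P u)).
assert (Htau : forall u, S u -> P u (tau u)).
{ intros u Su. unfold tau. apply epsilon_spec.
  destruct Hmu as [m [Hm1 Hm2]].
  apply (tau_ex X phi mu Hphi Hb u (HSsphere u Su)).
  - simpl. rewrite nscal_1. specialize (Hm2 u Su). lra.
  - apply (Ha u Su mu). }
exists tau. split; [|split].
- intros u Su. apply (Htau u Su).
- intros u Su eps He. destruct (Htau u Su) as [HT1 HT2].
  set (T := tau u) in *.
  set (e := Rmin eps (T - 1) / 2).
  assert (he1 : Rmin eps (T - 1) <= eps) by apply Rmin_l.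
  assert (he2 : Rmin eps (T - 1) <= T - 1) by apply Rmin_r.
  assert (he3 : 0 < Rmin eps (T - 1)) by (apply Rmin_glb_lt; lra).
  assert (Hlo : mu < phi (nscal (T - e) u)) by (apply (HT2 (T - e)); unfold e; lra).
  assert (Hhi : phi (nscal (T + e) u) < mu) by (apply (HT2 (T + e)); unfold e; lra).
  destruct (phi_cont X phi Hphi (nscal (T - e) u) (phi (nscal (T - e) u) - mu)) as [d1 [Hd1 C1]]; [lra|].
  destruct (phi_cont X phi Hphi (nscal (T + e) u) (mu - phi (nscal (T + e) u))) as [d2 [Hd2 C2]]; [lra|].
  assert (Tme : 0 < T - e) by (unfold e; lra).
  exists (Rmin (d1 / (T - e)) (d2 / (T + e))). split.
  { apply Rmin_glb_lt; apply Rdiv_lt_0_compat; unfold e in *; lra. }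
  intros v Sv Hv.
  assert (k1 := Rmin_l (d1 / (T - e)) (d2 / (T + e))). assert (k2 := Rmin_r (d1 / (T - e)) (d2 / (T + e))).
  pose proof (nnorm_ge0 _ (nsub v u)) as Hn.
  assert (A1 : mu < phi (nscal (T - e) v)).
  { assert (nnorm (nsub (nscal (T - e) v) (nscal (T - e) u)) < d1).
    { rewrite nsub_scal_r, nnorm_scal, Rabs_pos_eq by lra.
      apply Rmult_lt_reg_r with (/ (T - e)); [apply Rinv_0_lt_compat; lra|].
      replace ((T - e) * nnorm (nsub v u) * / (T - e)) with (nnorm (nsub v u)) by (field; lra).
      unfold Rdiv in k1. lra. }
    specialize (C1 _ H). pose proof (Rle_abs (phi (nscal (T - e) u) - phi (nscal (T - e) v))).
    rewrite Rabs_minus_sym in C1. lra. }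
  assert (A2 : phi (nscal (T + e) v) < mu).
  { assert (nnorm (nsub (nscal (T + e) v) (nscal (T + e) u)) < d2).
    { rewrite nsub_scal_r, nnorm_scal, Rabs_pos_eq by (unfold e in *; lra).
      apply Rmult_lt_reg_r with (/ (T + e)); [apply Rinv_0_lt_compat; unfold e in *; lra|].
      replace ((T + e) * nnorm (nsub v u) * / (T + e)) with (nnorm (nsub v u)) by (field; unfold e in *; lra).
      unfold Rdiv in k2. lra. }
    specialize (C2 _ H). pose proof (Rle_abs (phi (nscal (T + e) v) - phi (nscal (T + e) u))).
    lra. }
  destruct (Htau v Sv) as [HV1 HV2].
  assert (B1 : T - e < tau v).
  { apply Rnot_le_lt. intros h. destruct (HV2 (T - e) ltac:(unfold e; lra)) as [_ [Q2 Q3]].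
    destruct h as [h|h]; [specialize (Q3 h)|specialize (Q2 (eq_sym h))]; lra. }
  assert (B2 : tau v < T + e).
  { apply Rnot_le_lt. intros h. destruct (HV2 (T + e) ltac:(unfold e; lra)) as [Q1 [Q2 _]].
    destruct h as [h|h]; [specialize (Q1 h)|specialize (Q2 h)]; lra. }
  apply Rabs_def1; unfold e in *; lra.
- intros u t Su Ht. apply (Htau u Su). exact Ht.
Qed.
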